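(* Let $\Phi=(A;\{E_i\}_{i=0}^d;A^*;\{E^*_i\}_{i=0}^d)$ be a tridiagonal system on $V$ with $d\ge1$, such that $(A,A^* )$ satisfies the $q$-Serre relations, with $E_iV$ the eigenspace of $A$ for $\theta_i=q^{2i-d}$ and $E^*_iV$ the eigenspace of $A^*$ for $\theta^*_i=q^{d-2i}$. Let $\{U_i\}_{i=0}^d$ be its split decomposition, $K:V\to V$ the linear map acting on $U_i$ as $q^{d-2i}I$, $t$ a scalar, $B^*=tA^*+(1-t)K$, and let $E'_0$ be the primitive idempotent of $B^*$ for the eigenvalue $\theta^*_0$. Then $U_0=E'_0V$.
   Context: $\mathcal K$ is an algebraically closed field; $V$ is a nonzero finite-dimensional vector space over $\mathcal K$; $q\in\mathcal K$ is nonzero and not a root of unity; $[3]_q=q^2+1+q^{-2}$. The $q$-Serre relations for $(X,Y)$: $X^3Y-[3]_qX^2YX+[3]_qXYX^2-YX^3=0$ and $Y^3X-[3]_qY^2XY+[3]_qYXY^2-XY^3=0$. Primitive idempotent of a diagonalizable $X$ for eigenvalue $\lambda_i$: $\prod_{j\ne i}\frac{X-\lambda_jI}{\lambda_i-\lambda_j}$. A tridiagonal system on $V$ is a sequence $(A;\{E_i\}_{i=0}^d;A^*;\{E^*_i\}_{i=0}^d)$ with $A,A^*$ diagonalizable, $\{E_i\}$, $\{E^*_i\}$ orderings of their primitive idempotents, $E_iA^*E_j=0$ and $E^*_iAE^*_j=0$ when $|i-j|>1$, and no subspaces other than $0,V$ invariant under both $A$ and $A^*$. Split decomposition: $U_i=(E^*_0V+\cdots+E^*_iV)\cap(E_iV+\cdots+E_dV)$;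 known: $V=U_0\oplus\cdots\oplus U_d$, $(A-\theta_iI)U_i\subseteq U_{i+1}$, $(A^*-\theta^*_iI)U_i\subseteq U_{i-1}$ ($U_{-1}=U_{d+1}=0$). It is a fact (proved in the paper) that $B^*$ is diagonalizable with eigenvalues $\theta^*_0,\dots,\theta^*_d$ and $\theta^*_i$-eigenspace of dimension $\dim U_i$. *)

(* Defs.v *)
From HB Require Import structures.
From mathcomp Require Import all_boot all_order all_algebra.
Set Implicit Arguments. Unset Strict Implicit. Unset Printing Implicit Defensive.
Import Order.TTheory GRing.Theory Num.Theory.
Local Open Scope ring_scope.

(* Convention: V = 'rV[F]_n.+1 (nonzero, finite-dimensional); linear maps are
   square matrices acting on the right of row vectors (v |-> v *m X);
   subspaces are row spaces of matrices (mxalgebra, %MS). Then X V is the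
   row space of X. *)

Section Defs.
Variable F : closedFieldType.

Definition eigs n (X : 'M[F]_n) : seq F :=
  undup (sval (closed_field_poly_normal (char_poly X))).

Definition prim_idem n (X : 'M[F]_n.+1) (lam : F) : 'M[F]_n.+1 :=
  \prod_(mu <- eigs X | mu != lam) ((lam - mu)^-1 *: (X - mu%:M)).

Definition theta (q : F) (d i : nat) : F := q ^ ((2 * i)%:Z - d%:Z).
Definition theta_s (q : F) (d i : nat) : F := q ^ (d%:Z - (2 * i)%:Z).

Definition split_sp n d (E Es : 'I_d.+1 -> 'M[F]_n) (i : 'I_d.+1) : 'M[F]_n :=
  ((\sum_(k < d.+1 | (k <= i)%N) Es k) :&: (\sum_(k < d.+1 | (i <= k)%N) E k))%MS.

End Defs.

(* Main.v *)
Require Import Defs.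
From HB Require Import structures.
From mathcomp Require Import all_boot all_order all_algebra.
From mathcomp Require Import zify.
Import Order.TTheory GRing.Theory Num.Theory.
Local Open Scope ring_scope.
Set Implicit Arguments. Unset Strict Implicit. Unset Printing Implicit Defensive.

Section Gen.
Variable F : closedFieldType.
Variable n : nat.
Implicit Types X : 'M[F]_n.+1.

Lemma ev_prod X m (W : 'M[F]_(m, n.+1)) r lam (s : seq F) (P : pred F) :
  W *m X = r *: W ->
  W *m (\prod_(mu <- s | P mu) ((lam - mu)^-1 *: (X - mu%:M))) =
  (\prod_(mu <- s | P mu) ((lam - mu)^-1 * (r - mu))) *: W.
Proof.
move=> HW; elim: s => [|x s IH]; first by rewrite !big_nil mulmx1 scale1r.
rewrite !big_cons; case: (P x) => //.
rewrite -mulmxE mulmxA -scalemxAr mulmxBr mul_mx_scalar HW -scalerBl.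
by rewrite -!scalemxAl IH !scalerA.
Qed.

Lemma eig_in_eigs X r : eigenvalue X r -> r \in eigs X.
Proof.
rewrite eigenvalue_root_char /eigs mem_undup.
case: (closed_field_poly_normal _) => s /= Hs.
rewrite Hs rootZ ?root_prod_XsubC //.
by rewrite lead_coef_eq0 -size_poly_eq0 size_char_poly.
Qed.

Lemma KL1 X r lam : r != lam -> eigenspace X r *m prim_idem X lam = 0.
Proof.
move=> rl; have HW : eigenspace X r *m X = r *: eigenspace X r by apply/eigenspaceP.
rewrite /prim_idem (ev_prod _ _ _ HW).
have [Hr|Hr] := boolP (eigenvalue X r).
  suff -> : \prod_(mu <- eigs X | mu != lam) ((lam - mu)^-1 * (r - mu)) = 0.
    by rewrite scale0r.
  apply/eqP; rewrite prodf_seq_eq0; apply/hasP; exists r; first exact: eig_in_eigs.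
  by rewrite rl subrr mulr0 eqxx.
by move: Hr; rewrite /eigenvalue negbK => /eqP ->; rewrite scaler0.
Qed.

Lemma KL2 X lam : eigenspace X lam *m prim_idem X lam = eigenspace X lam.
Proof.
have HW : eigenspace X lam *m X = lam *: eigenspace X lam by apply/eigenspaceP.
rewrite /prim_idem (ev_prod _ _ _ HW).
rewrite big1_seq ?scale1r // => mu /andP[Hm _].
by rewrite mulVf // subr_eq0 eq_sym.
Qed.


Lemma kill (I : finType) (f : I -> F) X lam :
  (1%:M <= \sum_(i : I) eigenspace X (f i))%MS ->
  prim_idem X lam *m (X - lam%:M) = 0.
Proof.
move=> H1; apply/eqP; rewrite -[prim_idem X lam *m _]mul1mx -sub_kermx.
apply: submx_trans H1 _; apply/sumsmx_subP => i _; rewrite sub_kermx mulmxA.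
have [->|ne] := eqVneq (f i) lam.
  by rewrite KL2 /eigenspace mulmx_ker.
by rewrite KL1 // mul0mx.
Qed.

Lemma prim_sub_eig (I : finType) (f : I -> F) X lam :
  (1%:M <= \sum_(i : I) eigenspace X (f i))%MS ->
  (prim_idem X lam <= eigenspace X lam)%MS.
Proof. by move=> H; rewrite /eigenspace sub_kermx (kill _ H). Qed.

Lemma eig_sub_prim X lam : (eigenspace X lam <= prim_idem X lam)%MS.
Proof. by rewrite -{1}KL2 submxMl. Qed.

Lemma full_of_diag d (f : 'I_d.+1 -> F) X :
  diagonalizable X -> (forall lam, eigenvalue X lam -> exists i, lam = f i) ->
  (1%:M <= \sum_(i < d.+1) eigenspace X (f i))%MS.
Proof.
move=> /diagonalizablePeigen [rs _ H] Hev.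
apply: submx_trans (_ : 1%:M <= \sum_(r <- rs) eigenspace X r)%MS _.
  by rewrite H.
elim: rs {H} => [|r rs IH]; first by rewrite big_nil sub0mx.
rewrite big_cons addsmx_sub IH andbT.
case: (boolP (eigenvalue X r)) => [/Hev [i ->] | ne].
  exact: (sumsmx_sup i).
by move: ne; rewrite /eigenvalue negbK => /eqP ->; exact: sub0mx.
Qed.

Lemma sumE d (f : 'I_d.+1 -> F) X : injective f ->
  (1%:M <= \sum_(i < d.+1) eigenspace X (f i))%MS ->
  \sum_(i < d.+1) prim_idem X (f i) = 1%:M.
Proof.
move=> finj H1; apply/eqP; rewrite -subr_eq0; apply/eqP.
rewrite -[_ - _]mul1mx; apply/eqP; rewrite -sub_kermx.
apply: submx_trans H1 _; apply/sumsmx_subP => i _.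
rewrite sub_kermx mulmxBr mulmx1 mulmx_sumr (bigD1 i) //= KL2 big1 ?addr0 ?subrr //.
move=> j ji; apply: KL1; by rewrite (inj_eq finj) eq_sym.
Qed.

Lemma tri_move d (E e : 'I_d.+1 -> 'M[F]_n.+1) Y k (P : pred 'I_d.+1) :
  \sum_j E j = 1%:M -> (forall j, (E j :=: e j)%MS) -> e k *m E k = e k ->
  (forall j, ~~ P j -> E k *m Y *m E j = 0) ->
  (e k *m Y <= \sum_(j | P j) e j)%MS.
Proof.
move=> sE eqE ek H0.
rewrite -[e k *m Y]mulmx1 -sE mulmx_sumr; apply: summx_sub => j _.
case Pj: (P j).
  by apply: (sumsmx_sup j) => //; rewrite -(eqE j) submxMl.
by rewrite -{1}ek -!mulmxA (mulmxA (E k)) H0 ?Pj // mulmx0 sub0mx.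
Qed.

Lemma subBsc m (X : 'M[F]_(m, n.+1)) Y c p (S : 'M[F]_(p, n.+1)) :
  (X *m Y <= S)%MS -> (X <= S)%MS -> (X *m (Y - c%:M) <= S)%MS.
Proof.
move=> h1 h2; rewrite mulmxBr mul_mx_scalar addmx_sub // eqmx_opp scalemx_sub //.
Qed.

Lemma qinj (q : F) : q != 0 -> (forall m : nat, (0 < m)%N -> q ^+ m != 1) ->
  forall a b : int, q ^ a = q ^ b -> a = b.
Proof.
move=> q0 qr a b h.
have h1 : q ^ (a - b) = 1.
  by rewrite expfzDr // -invr_expz h divff // expfz_neq0.
apply/eqP; rewrite -subr_eq0; apply/eqP.
move: h1; case: (a - b) => m /=.
  case: m => // m h1; move: (qr m.+1 isT).
  by change (q ^+ m.+1 = 1) in h1; rewrite h1 eqxx.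
move=> h1; change ((q ^+ m.+1)^-1 = 1) in h1; move/eqP: h1; rewrite invr_eq1 => h1.
by move: (qr m.+1 isT); rewrite h1.
Qed.

Lemma eig_shift X r c : eigenspace X r *m (X - c%:M) = (r - c) *: eigenspace X r.
Proof.
rewrite mulmxBr mul_mx_scalar.
have /eigenspaceP -> := submx_refl (eigenspace X r).
by rewrite scalerBl.
Qed.

End Gen.

Section Main.
Variable F : closedFieldType.
Variables (n d : nat) (q t : F) (A As K : 'M[F]_n.+1).
Hypothesis q0 : q != 0.
Hypothesis qr : forall m : nat, (0 < m)%N -> q ^+ m != 1.
Hypothesis dA : diagonalizable A.
Hypothesis dAs : diagonalizable As.
Hypothesis evA : forall lam, eigenvalue A lam -> exists i : 'I_d.+1, lam = theta q d i.
Hypothesis evAs0 : eigenvalue As (theta_s q d 0).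
Hypothesis evAs : forall lam, eigenvalue As lam -> exists i : 'I_d.+1, lam = theta_s q d i.
Hypothesis tdA : forall i j : 'I_d.+1, (i.+1 < j)%N || (j.+1 < i)%N ->
     prim_idem A (theta q d i) *m As *m prim_idem A (theta q d j) = 0.
Hypothesis tdAs : forall i j : 'I_d.+1, (i.+1 < j)%N || (j.+1 < i)%N ->
     prim_idem As (theta_s q d i) *m A *m prim_idem As (theta_s q d j) = 0.

Local Notation th i := (theta q d i).
Local Notation ths i := (theta_s q d i).
Local Notation eA k := (eigenspace A (th k)).
Local Notation eS k := (eigenspace As (ths k)).

Lemma th_inj (i j : nat) : th i = th j -> i = j.
Proof. move/(qinj q0 qr) => h; apply/eqP; rewrite -(eqn_pmul2l (isT : 0 < 2)%N); apply/eqP; lia. Qed.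

Lemma ths_inj (i j : nat) : ths i = ths j -> i = j.
Proof. move/(qinj q0 qr) => h; lia. Qed.


Lemma fullA : (1%:M <= \sum_(i < d.+1) eA i)%MS.
Proof. exact: (full_of_diag (f := fun i : 'I_d.+1 => th i) dA evA). Qed.
Lemma fullS : (1%:M <= \sum_(i < d.+1) eS i)%MS.
Proof. exact: (full_of_diag (f := fun i : 'I_d.+1 => ths i) dAs evAs). Qed.
Lemma thI : injective (fun i : 'I_d.+1 => th i).
Proof. by move=> i j /th_inj h; apply: val_inj. Qed.
Lemma thsI : injective (fun i : 'I_d.+1 => ths i).
Proof. by move=> i j /ths_inj h; apply: val_inj. Qed.
Lemma sumEA : \sum_(i < d.+1) prim_idem A (th i) = 1%:M.
Proof. exact: (sumE thI fullA). Qed.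
Lemma sumES : \sum_(i < d.+1) prim_idem As (ths i) = 1%:M.
Proof. exact: (sumE thsI fullS). Qed.
Lemma EeqA (k : nat) : (prim_idem A (th k) :=: eA k)%MS.
Proof. by apply/eqmxP; rewrite (prim_sub_eig _ fullA) eig_sub_prim. Qed.
Lemma EeqS (k : nat) : (prim_idem As (ths k) :=: eS k)%MS.
Proof. by apply/eqmxP; rewrite (prim_sub_eig _ fullS) eig_sub_prim. Qed.

Lemma T1 (k : 'I_d.+1) : (eA k *m As <= \sum_(j < d.+1 | (k <= j.+1)%N) eA j)%MS.
Proof.
apply: (tri_move (E := fun j : 'I_d.+1 => prim_idem A (th j)) (e := fun j : 'I_d.+1 => eA j)).
- exact: sumEA.
- by move=> j; exact: EeqA.
- exact: KL2.
- move=> j hj; apply: tdA; apply/orP; right; by rewrite ltnNge.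
Qed.

Lemma T2 (k : 'I_d.+1) : (eS k *m A <= \sum_(j < d.+1 | (j <= k.+1)%N) eS j)%MS.
Proof.
apply: (tri_move (E := fun j : 'I_d.+1 => prim_idem As (ths j)) (e := fun j : 'I_d.+1 => eS j)).
- exact: sumES.
- by move=> j; exact: EeqS.
- exact: KL2.
- move=> j hj; apply: tdAs; apply/orP; left; by rewrite ltnNge.
Qed.

Definition low (i : nat) := (\sum_(k < d.+1 | (k <= i)%N) eS k)%MS.
Definition upp (i : nat) := (\sum_(k < d.+1 | (i <= k)%N) eA k)%MS.
Definition Un (i : nat) := (low i :&: upp i)%MS.

Lemma lowA i : (low i *m (A - (th i)%:M) <= low i.+1)%MS.
Proof.
apply: subBsc.
  rewrite /low sumsmxMr; apply/sumsmx_subP => k hk; apply: submx_trans (T2 k) _.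
  apply/sumsmx_subP => j hj; apply: (sumsmx_sup j) => //; lia.
apply/sumsmx_subP => k hk; apply: (sumsmx_sup k) => //; lia.
Qed.

Lemma uppA i : (upp i *m (A - (th i)%:M) <= upp i.+1)%MS.
Proof.
rewrite /upp sumsmxMr; apply/sumsmx_subP => k hk; rewrite eig_shift.
case: (eqVneq (k : nat) i) => [e | ne].
  by rewrite e subrr scale0r sub0mx.
apply: scalemx_sub; apply: (sumsmx_sup k) => //; lia.
Qed.

Lemma UnA i : (Un i *m (A - (th i)%:M) <= Un i.+1)%MS.
Proof.
rewrite sub_capmx; apply/andP; split.
  apply: submx_trans (lowA i); apply: submxMr; apply: capmxSl.
apply: submx_trans (uppA i); apply: submxMr; apply: capmxSr.
Qed.

Lemma lowS i : (low i *m (As - (ths i)%:M) <= \sum_(k < d.+1 | (k < i)%N) eS k)%MS.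
Proof.
rewrite /low sumsmxMr; apply/sumsmx_subP => k hk; rewrite eig_shift.
case: (eqVneq (k : nat) i) => [e | ne].
  by rewrite e subrr scale0r sub0mx.
apply: scalemx_sub; apply: (sumsmx_sup k) => //; lia.
Qed.

Lemma uppS i : (upp i *m (As - (ths i)%:M) <= \sum_(k < d.+1 | (i <= k.+1)%N) eA k)%MS.
Proof.
apply: subBsc.
  rewrite /upp sumsmxMr; apply/sumsmx_subP => k hk; apply: submx_trans (T1 k) _.
  apply/sumsmx_subP => j hj; apply: (sumsmx_sup j) => //; lia.
apply/sumsmx_subP => k hk; apply: (sumsmx_sup k) => //; lia.
Qed.

Lemma UnS i : (Un i.+1 *m (As - (ths i.+1)%:M) <= Un i)%MS.
Proof.
rewrite sub_capmx; apply/andP; split.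
  exact: submx_trans (submxMr _ (capmxSl _ _)) (lowS _).
exact: submx_trans (submxMr _ (capmxSr _ _)) (uppS _).
Qed.

Lemma UnS0 : Un 0 *m (As - (ths 0)%:M) = 0.
Proof.
apply/eqP; rewrite -submx0; apply: submx_trans (submxMr _ (capmxSl _ _)) _.
apply: submx_trans (lowS 0) _; by apply/sumsmx_subP => k.
Qed.


Hypothesis hK : forall (i : 'I_d.+1) (v : 'rV[F]_n.+1),
     (v <= split_sp (fun k : 'I_d.+1 => prim_idem A (theta q d k))
                    (fun k : 'I_d.+1 => prim_idem As (theta_s q d k)) i)%MS ->
     v *m K = theta_s q d i *: v.

Lemma split_eq (i : 'I_d.+1) :
  (split_sp (fun k : 'I_d.+1 => prim_idem A (theta q d k))
            (fun k : 'I_d.+1 => prim_idem As (theta_s q d k)) i :=: Un i)%MS.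
Proof.
rewrite /split_sp /Un /low /upp; apply: cap_eqmx; apply: eqmx_sums => k _.
  exact: EeqS.
exact: EeqA.
Qed.

Lemma UnK (i : 'I_d.+1) : Un i *m K = ths i *: Un i.
Proof.
apply/row_matrixP => r; rewrite -mul_mx_scalar !row_mul mul_mx_scalar; apply: hK.
by rewrite split_eq row_sub.
Qed.

Local Notation Bs := (t *: As + (1 - t) *: K).

Lemma UnB (i : 'I_d.+1) : Un i *m (Bs - (ths i)%:M) = t *: (Un i *m (As - (ths i)%:M)).
Proof.
rewrite !mulmxBr mulmxDr -!scalemxAr UnK !mul_mx_scalar.
by rewrite scalerBl scale1r scalerBr addrA addrAC addrK.
Qed.


Lemma UnBS (i : nat) (hi : (i.+1 < d.+1)%N) :
  (Un i.+1 *m (Bs - (ths i.+1)%:M) <= Un i)%MS.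
Proof. by rewrite (UnB (Ordinal hi)) scalemx_sub // UnS. Qed.

Lemma UnB0 : Un 0 *m (Bs - (ths 0)%:M) = 0.
Proof. by rewrite (UnB ord0) UnS0 scaler0. Qed.

Definition W := (\sum_(i < d.+1) Un i)%MS.

Lemma Un_le_W j : (Un j <= W)%MS.
Proof.
case: (ltnP j d.+1) => h; first exact: (sumsmx_sup (Ordinal h)).
apply: submx_trans (capmxSr _ _) _; apply/sumsmx_subP => k hk.
have := ltn_ord k; lia.
Qed.

Lemma WA : (W *m A <= W)%MS.
Proof.
rewrite /W sumsmxMr; apply/sumsmx_subP => i _.
have -> : Un i *m A = Un i *m (A - (th i)%:M) + th i *: Un i.
  by rewrite mulmxBr mul_mx_scalar subrK.
by rewrite addmx_sub ?scalemx_sub ?Un_le_W // (submx_trans (UnA i)) ?Un_le_W.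
Qed.

Lemma WAs : (W *m As <= W)%MS.
Proof.
rewrite /W sumsmxMr; apply/sumsmx_subP => i _.
have -> : Un i *m As = Un i *m (As - (ths i)%:M) + ths i *: Un i.
  by rewrite mulmxBr mul_mx_scalar subrK.
rewrite addmx_sub ?scalemx_sub ?Un_le_W //.
case: i => [[|j] hj] /=; first by rewrite UnS0 sub0mx.
exact: submx_trans (UnS j) (Un_le_W j).
Qed.

Hypothesis hirr : forall W : 'M[F]_n.+1, stablemx W A -> stablemx W As ->
     (W == (0 : 'M[F]_n.+1))%MS || (W == (1%:M : 'M[F]_n.+1))%MS.

Lemma eS0U : (eS 0 <= Un 0)%MS.
Proof.
rewrite sub_capmx; apply/andP; split; first exact: (sumsmx_sup ord0).
apply: submx_trans (submx1 _) _; apply: submx_trans fullA _.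
by apply/sumsmx_subP => k _; apply: (sumsmx_sup k).
Qed.

Lemma W1 : (1%:M <= W)%MS.
Proof.
case/orP: (hirr WA WAs) => /andP [h1 h2] //.
have : (eS 0 <= (0 : 'M[F]_n.+1))%MS.
  exact: submx_trans eS0U (submx_trans (Un_le_W 0) h1).
by rewrite submx0 => h; move: evAs0; rewrite /eigenvalue h.
Qed.

Local Notation eB k := (eigenspace Bs (ths k)).

Lemma flagB i : (i < d.+1)%N -> (Un i <= \sum_(k < d.+1 | (k <= i)%N) eB k)%MS.
Proof.
elim: i => [|j IH] hi.
  apply: (sumsmx_sup ord0) => //.
  by rewrite /eigenspace sub_kermx UnB0.
have hj : (j < d.+1)%N by lia.
set M := Bs - (ths j.+1)%:M.
set S := (\sum_(k < d.+1 | (k <= j)%N) eB k)%MS.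
have h1 : (Un j.+1 *m M <= S *m M)%MS.
  apply: submx_trans (UnBS hi) (submx_trans (IH hj) _).
  rewrite sumsmxMr; apply: sumsmxS => k hk; rewrite eig_shift eqmx_scale //.
  by rewrite subr_eq0; apply/eqP => /ths_inj; lia.
case/submxP: h1 => D hD.
have h2 : (Un j.+1 - D *m S <= eB j.+1)%MS.
  by rewrite /eigenspace sub_kermx mulmxBl hD mulmxA subrr.
rewrite -(subrK (D *m S) (Un j.+1)) addmx_sub //.
  by apply: submx_trans h2 _; apply: (sumsmx_sup (Ordinal hi)).
apply: submx_trans (submxMl D S) _; apply/sumsmx_subP => k hk.
apply: (sumsmx_sup k) => //; lia.
Qed.

Lemma fullB : (1%:M <= \sum_(k < d.+1) eB k)%MS.
Proof.
apply: submx_trans W1 _; apply/sumsmx_subP => i _.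
apply: submx_trans (flagB (ltn_ord i)) _.
by apply/sumsmx_subP => k _; apply: (sumsmx_sup k).
Qed.

Fixpoint Qf (i : nat) : 'M[F]_n.+1 :=
  if i is j.+1 then (Bs - (ths j.+1)%:M) *m Qf j else 1%:M.

Lemma Mcomm a b : (Bs - a%:M) *m (Bs - b%:M) = (Bs - b%:M) *m (Bs - a%:M).
Proof.
have h c : Bs - c%:M = horner_mx Bs ('X - c%:P).
  by rewrite rmorphB /= horner_mx_X horner_mx_C.
by rewrite !h mulmxE -!rmorphM mulrC.
Qed.

Lemma QMcomm a i : (Bs - a%:M) *m Qf i = Qf i *m (Bs - a%:M).
Proof.
elim: i => [|i IH] /=; first by rewrite mulmx1 mul1mx.
by rewrite mulmxA Mcomm -mulmxA IH mulmxA.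
Qed.

Lemma U0eig : (Un 0 <= eB 0)%MS.
Proof. by rewrite /eigenspace sub_kermx UnB0. Qed.

Lemma U0M a : (Un 0 *m (Bs - a%:M) <= Un 0)%MS.
Proof.
rewrite mulmxBr mul_mx_scalar.
have /eigenspaceP -> := U0eig.
by rewrite addmx_sub ?eqmx_opp ?scalemx_sub.
Qed.

Lemma QU i : (i <= d)%N -> forall j, (j <= i)%N -> (Un j *m Qf i <= Un 0)%MS.
Proof.
elim: i => [|i IH] hi j hj.
  have -> : j = 0%N by lia.
  by rewrite /= mulmx1.
rewrite /=; case: (eqVneq j i.+1) => [->|ne].
  have hi' : (i.+1 < d.+1)%N by lia.
  rewrite mulmxA; apply: submx_trans (submxMr _ (UnBS hi')) _.
  apply: IH => //; lia.
rewrite QMcomm mulmxA; apply: submx_trans (submxMr _ (IH _ j _)) (U0M _); lia.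
Qed.

Lemma eB0Q i : exists2 c, c != 0 & eB 0 *m Qf i = c *: eB 0.
Proof.
elim: i => [|i [c hc IH]]; first by exists 1; rewrite ?oner_eq0 // mulmx1 scale1r.
exists ((ths 0 - ths i.+1) * c).
  rewrite mulf_neq0 // subr_eq0; apply/eqP => /ths_inj; lia.
by rewrite /= mulmxA eig_shift -scalemxAl IH scalerA.
Qed.

Lemma eB0U : (eB 0 <= Un 0)%MS.
Proof.
have [c hc hQ] := eB0Q d.
rewrite -(eqmx_scale (eB 0) hc) -hQ.
apply: submx_trans (submxMr _ (submx_trans (submx1 _) W1)) _.
rewrite /W sumsmxMr; apply/sumsmx_subP => j _; apply: QU => //.
have := ltn_ord j; lia.
Qed.

Lemma main_res :
  (split_sp (fun k : 'I_d.+1 => prim_idem A (theta q d k))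
            (fun k : 'I_d.+1 => prim_idem As (theta_s q d k)) ord0
   == prim_idem Bs (ths 0))%MS.
Proof.
apply/andP; split; rewrite split_eq.
  exact: submx_trans U0eig (eig_sub_prim _ _).
exact: submx_trans (prim_sub_eig _ fullB) eB0U.
Qed.

End Main.

Unset Implicit Arguments.

Theorem lemma7p7 (F : closedFieldType) (n d : nat) (q t : F)
  (A As K : 'M[F]_n.+1) :
  (1 <= d)%N ->
  q != 0 ->
  (forall m : nat, (0 < m)%N -> q ^+ m != 1) ->
  (* A, A* diagonalizable with eigenvalues exactly theta_0..theta_d, resp.
     theta*_0..theta*_d *)
  diagonalizable A -> diagonalizable As ->
  (forall i : 'I_d.+1, eigenvalue A (theta q d i)) ->
  (forall lam, eigenvalue A lam -> exists i : 'I_d.+1, lam = theta q d i) ->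
  (forall i : 'I_d.+1, eigenvalue As (theta_s q d i)) ->
  (forall lam, eigenvalue As lam -> exists i : 'I_d.+1, lam = theta_s q d i) ->
  (* tridiagonality *)
  (forall i j : 'I_d.+1, (i.+1 < j)%N || (j.+1 < i)%N ->
     prim_idem A (theta q d i) *m As *m prim_idem A (theta q d j) = 0) ->
  (forall i j : 'I_d.+1, (i.+1 < j)%N || (j.+1 < i)%N ->
     prim_idem As (theta_s q d i) *m A *m prim_idem As (theta_s q d j) = 0) ->
  (* irreducibility *)
  (forall W : 'M[F]_n.+1, stablemx W A -> stablemx W As ->
     (W == (0 : 'M[F]_n.+1))%MS || (W == (1%:M : 'M[F]_n.+1))%MS) ->
  (* q-Serre relations *)
  A ^+ 3 * As - (q ^+ 2 + 1 + q ^- 2) *: (A ^+ 2 * As * A)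
    + (q ^+ 2 + 1 + q ^- 2) *: (A * As * A ^+ 2) - As * A ^+ 3 = 0 ->
  As ^+ 3 * A - (q ^+ 2 + 1 + q ^- 2) *: (As ^+ 2 * A * As)
    + (q ^+ 2 + 1 + q ^- 2) *: (As * A * As ^+ 2) - A * As ^+ 3 = 0 ->
  (* K acts on U_i as q^(d-2i) I *)
  (forall (i : 'I_d.+1) (v : 'rV[F]_n.+1),
     (v <= split_sp (fun k : 'I_d.+1 => prim_idem A (theta q d k))
                    (fun k : 'I_d.+1 => prim_idem As (theta_s q d k)) i)%MS ->
     v *m K = theta_s q d i *: v) ->
  (split_sp (fun k : 'I_d.+1 => prim_idem A (theta q d k))
            (fun k : 'I_d.+1 => prim_idem As (theta_s q d k)) ord0
   == prim_idem (t *: As + (1 - t) *: K) (theta_s q d 0))%MS.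
Proof.
move=> hd q0 qr dA dAs evA evA' evAs evAs' tdA tdAs hirr s1 s2 hK.
exact: (main_res t q0 qr dA dAs evA' (evAs ord0) evAs' tdA tdAs hK hirr).
Qed.
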